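(* Let $\mathbf{x}_1,\dots,\mathbf{x}_N\in\mathbb{R}^d$ be strictly linearly separable, i.e. there exists $\mathbf{w}_*\in\mathbb{R}^d$ with $\mathbf{w}_*^\top\mathbf{x}_n>0$ for all $n$. Let $\ell:\mathbb{R}\to\mathbb{R}$ be positive, differentiable, with $\beta$-Lipschitz derivative, $\ell'(u)<0$ for all $u$, $\lim_{u\to\infty}\ell(u)=\lim_{u\to\infty}\ell'(u)=0$, and $\limsup_{u\to-\infty}\ell'(u)\neq 0$. Let $\eta>0$ and let $B$ be a positive integer with $K=N/B$ an integer. For any starting point $\mathbf{w}(0)\in\mathbb{R}^d$, let $\mathbf{w}(t)$ be the iterates of stochastic gradient descent $$\mathbf{w}(t+1)=\mathbf{w}(t)-\frac{\eta}{B}\sum_{n\in\mathcal{B}(t)}\ell'\big(\mathbf{w}(t)^\top\mathbf{x}_n\big)\mathbf{x}_n,$$ where each minibatch $\mathcal{B}(t)\subset\{1,\dots,N\}$ consists of $B$ distinct indices and the minibatches are chosen according to either sampling regime (random sampling with replacement, or sampling without replacement) described in the context. Then $\|\mathbf{w}(t)\|\to\infty$ as $t\to\infty$.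
   Context: Sampling regimes. (Random sampling with replacement): at each iteration $t$ a minibatch $\mathcal{B}(t)$ of $B$ distinct indices is sampled randomly and uniformly (independently across iterations), so that each sample has identical probability of being selected. (Sampling without replacement): at each epoch the minibatches partition the data, i.e. for every $u\in\{0,1,2,\dots\}$, $\bigcup_{k=0}^{K-1}\mathcal{B}(Ku+k)=\{1,\dots,N\}$ (the order may be arbitrary, even adversarial). *)

(* Defs.v *)
From HB Require Import structures.
From mathcomp Require Import all_boot all_order all_algebra.
From mathcomp Require Import all_classical all_reals all_analysis.
Set Implicit Arguments. Unset Strict Implicit. Unset Printing Implicit Defensive.
Import Order.TTheory GRing.Theory Num.Theory.
Import numFieldNormedType.Exports.
Local Open Scope ring_scope.

Definition dotv {R : realType} {d : nat} (u v : 'rV[R]_d) : R :=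
  \sum_(i < d) u 0 i * v 0 i.

Definition normv {R : realType} {d : nat} (u : 'rV[R]_d) : R :=
  Num.sqrt (dotv u u).

Definition limsup_ninfty {R : realType} (f : R -> R) : \bar R :=
  limf_esup (fun u => (f u)%:E) (ninfty_nbhs R).

Definition sgd_step {R : realType} {d N : nat} (ell : R -> R) (eta : R) (B : nat)
  (x : 'I_N -> 'rV[R]_d) (Bt : {set 'I_N}) (w : 'rV[R]_d) : 'rV[R]_d :=
  w - (eta / B%:R) *: \sum_(n in Bt) (derive1 ell (dotv w (x n))) *: x n.

(* Sampling regime, random sampling with replacement, as a property of a
   realization: every minibatch consists of B distinct indices (drawn i.i.d.
   uniformly; the conclusion is proved for every realization). *)
Definition random_sampling_path {N : nat} (B : nat) (Bt : nat -> {set 'I_N}) : Prop :=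
  forall t, #|Bt t| = B.

(* Sampling without replacement: minibatches of B distinct indices, and the
   K = N/B minibatches of each epoch partition {1..N} (arbitrary order). *)
Definition without_replacement {N : nat} (B : nat) (Bt : nat -> {set 'I_N}) : Prop :=
  (forall t, #|Bt t| = B) /\
  forall u : nat, \bigcup_(k < N %/ B) Bt (N %/ B * u + k)%N = [set: 'I_N].

(* Main.v *)
Require Import Defs.
From HB Require Import structures.
From mathcomp Require Import all_boot all_order all_algebra.
From mathcomp Require Import all_classical all_reals all_analysis.
Import Order.TTheory GRing.Theory Num.Theory.
Import numFieldNormedType.Exports.
Local Open Scope ring_scope.
Local Open Scope classical_set_scope.
Section H.
Context {R : realType} {d : nat}.
Implicit Types u v : 'rV[R]_d.

Lemma dotvC u v : dotv u v = dotv v u.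
Proof. by apply: eq_bigr => i _; rewrite mulrC. Qed.

Lemma dotvD u v1 v2 : dotv u (v1 + v2) = dotv u v1 + dotv u v2.
Proof. by rewrite /dotv -big_split; apply: eq_bigr => i _; rewrite mxE mulrDr. Qed.

Lemma dotvB u v1 v2 : dotv u (v1 - v2) = dotv u v1 - dotv u v2.
Proof. by rewrite /dotv -sumrB; apply: eq_bigr => i _; rewrite !mxE mulrBr. Qed.

Lemma dotvZ u a v : dotv u (a *: v) = a * dotv u v.
Proof. by rewrite /dotv mulr_sumr; apply: eq_bigr => i _; rewrite mxE mulrCA. Qed.

Lemma dotv0 u : dotv u 0 = 0.
Proof. by rewrite /dotv big1 // => i _; rewrite mxE mulr0. Qed.

Lemma dotv_sum {I : finType} (P : {pred I}) u (f : I -> 'rV[R]_d) :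
  dotv u (\sum_(n in P) f n) = \sum_(n in P) dotv u (f n).
Proof. exact: (big_morph (dotv u) (dotvD u) (dotv0 u)). Qed.

Lemma sum_ge_term {I : finType} (F : I -> R) j :
  (forall i, 0 <= F i) -> F j <= \sum_i F i.
Proof.
move=> F0; rewrite (bigD1 j) //= lerDl; exact: sumr_ge0.
Qed.

Lemma normv_ge0 u : 0 <= normv u.
Proof. exact: sqrtr_ge0. Qed.

Lemma coord_le_normv u i : `|u 0 i| <= normv u.
Proof.
rewrite /normv /dotv -sqrtr_sqr ler_sqrt; last by apply: sumr_ge0 => j _; rewrite -expr2 sqr_ge0.
by rewrite expr2; apply: (sum_ge_term (fun j => u 0 j * u 0 j)) => j; rewrite -expr2 sqr_ge0.
Qed.

Lemma dotv_bound u v : `|dotv u v| <= normv u * \sum_i `|v 0 i|.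
Proof.
rewrite /dotv mulr_sumr; apply: le_trans (ler_norm_sum _ _ _) _.
apply: ler_sum => i _; rewrite normrM; apply: ler_wpM2r => //; exact: coord_le_normv.
Qed.
End H.

Lemma lip_cont {R : realType} (f : R -> R) (beta : R) :
  (forall u v, `|f u - f v| <= beta * `|u - v|) -> continuous f.
Proof.
move=> lip u; apply/cvgrPdist_le => e e0.
apply/nbhs_ballP; exists (e / (`|beta| + 1)) => /=.
  by apply: divr_gt0 => //; rewrite ltr_wpDl.
move=> t /= ht.
apply: le_trans (lip u t) _.
have hb : 0 < `|beta| + 1 by rewrite ltr_wpDl.
apply: (@le_trans _ _ ((`|beta| + 1) * `|u - t|)).
  by apply: ler_wpM2r => //; apply: le_trans (ler_norm _) _; rewrite lerDl.
by rewrite -ler_pdivlMl // mulrC ltW.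
Qed.

Theorem lemma1 (R : realType) (d N : nat) (x : 'I_N -> 'rV[R]_d)
  (ell : R -> R) (beta eta : R) (B : nat)
  (w : nat -> 'rV[R]_d) (Bt : nat -> {set 'I_N}) :
  (exists wstar : 'rV[R]_d, forall n, 0 < dotv wstar (x n)) ->
  (forall u, 0 < ell u) ->
  (forall u, derivable ell u 1) ->
  (forall u v, `|derive1 ell u - derive1 ell v| <= beta * `|u - v|) ->
  (forall u, derive1 ell u < 0) ->
  ell u @[u --> +oo] --> 0 ->
  derive1 ell u @[u --> +oo] --> 0 ->
  limsup_ninfty (derive1 ell) != 0%E ->
  0 < eta ->
  (0 < B)%N -> (B %| N)%N ->
  (random_sampling_path B Bt \/ without_replacement B Bt) ->
  (forall t, w t.+1 = sgd_step ell eta B x (Bt t) (w t)) ->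
  normv (w t) @[t --> \oo] --> +oo.
Proof.
move=> [ws hws] _ _ lip neg _ _ _ eta0 B0 _ samp hw.
have Bsz : forall t, #|Bt t| = B by case: samp => [h|[h _]].
pose phi := fun u => - derive1 ell u.
have phi0 : forall u, 0 < phi u by move=> u; rewrite /phi oppr_gt0.
have cphi : continuous phi.
  by apply: (@lip_cont _ phi beta) => u v; rewrite /phi -opprD normrN; apply: lip.
pose a := fun t => dotv ws (w t).
pose g := fun n => dotv ws (x n).
have sB : 0 < eta / B%:R by apply: divr_gt0 => //; rewrite ltr0n.
have step : forall t, a t.+1 = a t + eta / B%:R *
     \sum_(n in Bt t) phi (dotv (w t) (x n)) * g n.
  move=> t; rewrite /a hw /sgd_step dotvB dotvZ dotv_sum.
  under eq_bigr do rewrite dotvZ.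
  rewrite -mulrN -sumrN; congr (_ + _ * _).
  apply: eq_bigr => n _; rewrite /phi mulNr //.
have mono : forall t, a t <= a t.+1.
  move=> t; rewrite step lerDl; apply: mulr_ge0; first exact: ltW.
  by apply: sumr_ge0 => n _; apply: mulr_ge0; apply: ltW; [exact: phi0 | exact: hws].
have monok : forall k t, a t <= a (k + t)%N.
  elim=> [|k IH] t //; apply: le_trans (IH t) _; exact: mono.
apply/cvgryPge => A.
have [//|H] := pselect (\forall t \near \oo, A <= normv (w t)).
exfalso.
have bad : forall T, exists t, (T <= t)%N /\ normv (w t) < A.
  move=> T; have [ok|nb] := pselect (exists t, (T <= t)%N /\ normv (w t) < A); first exact: ok.
  exfalso; apply: H; exists T => // t /= Tt; rewrite leNgt; apply/negP => lt.
  by apply: nb; exists t.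
have A0 : 0 < A.
  by have [t [_ ht]] := bad 0%N; apply: le_lt_trans ht; exact: normv_ge0.
pose C := \sum_n \sum_i `|x n 0 i|.
have C0 : 0 <= C by apply: sumr_ge0 => n _; apply: sumr_ge0.
pose L := A * C.
have L0 : 0 <= L by rewrite mulr_ge0 // ltW.
have LL : - L <= L by apply: (le_trans _ L0); rewrite oppr_le0.
have cw : {within `[- L, L], continuous phi} by apply: continuous_subspaceT.
have [c0 _ hc0] := @EVT_min R phi (- L) L LL cw.
pose S := \sum_n (g n)^-1.
have gS : forall n, (g n)^-1 <= S.
  by move=> n; apply: (sum_ge_term (fun n => (g n)^-1)) => m; rewrite invr_ge0; exact/ltW/hws.
have S0 : forall n : 'I_N, 0 < S by move=> n; apply: (lt_le_trans _ (gS n)); rewrite invr_gt0; exact: hws.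
have gLB : forall n, S^-1 <= g n.
  move=> n; rewrite -(invrK (g n)) lef_pV2 ?posrE ?invr_gt0 ?hws ?(S0 n) //.
pose delta := eta / B%:R * (phi c0 * S^-1).
have bstep : forall t, normv (w t) < A -> a t + delta <= a t.+1.
  move=> t ht; rewrite step lerD2l /delta; apply: ler_wpM2l; first exact: ltW.
  have : (0 < #|Bt t|)%N by rewrite Bsz.
  case/card_gt0P => n0 n0in.
  rewrite (bigD1 n0) //=.
  have rest : 0 <= \sum_(i in Bt t | i != n0) phi (dotv (w t) (x i)) * g i.
    by apply: sumr_ge0 => n _; apply: mulr_ge0; apply: ltW; [exact: phi0 | exact: hws].
  have inL : dotv (w t) (x n0) \in `[- L, L]%R.
    rewrite in_itv /= -ler_norml.
    apply: (le_trans (dotv_bound _ _)); apply: ler_pM.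
    - exact: normv_ge0.
    - by apply: sumr_ge0.
    - exact: ltW.
    - by apply: (sum_ge_term (fun n => \sum_i `|x n 0 i|)) => m; apply: sumr_ge0.
  have t1 : phi c0 * S^-1 <= phi (dotv (w t) (x n0)) * g n0.
    apply: ler_pM.
    - exact: ltW.
    - by rewrite invr_ge0 ltW // (S0 n0).
    - exact: hc0.
    - exact: gLB.
  by apply: (le_trans t1); rewrite lerDl.
have delta0 : 0 < delta.
  apply: mulr_gt0 => //; apply: mulr_gt0 => //.
  have [t [_ _]] := bad 0%N.
  have : (0 < #|Bt t|)%N by rewrite Bsz.
  by case/card_gt0P => n0 _; rewrite invr_gt0 (S0 n0).
pose Cs := \sum_i `|ws 0 i|.
have abound : forall t, normv (w t) < A -> a t <= A * Cs.
  move=> t ht; apply: le_trans (ler_norm _) _; rewrite /a dotvC.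
  apply: le_trans (dotv_bound _ _) _; apply: ler_wpM2r; first by apply: sumr_ge0.
  exact: ltW.
have grow : forall k : nat, exists T, a 0%N + k%:R * delta <= a T.
  elim=> [|k [T hT]]; first by exists 0%N; rewrite mul0r addr0.
  have [t [Tt ht]] := bad T.
  exists t.+1; apply: le_trans (bstep t ht).
  rewrite mulrSr mulrDl mul1r addrA lerD2r.
  apply: le_trans hT _; rewrite -(subnK Tt); exact: monok.
pose k := Num.Def.archi_bound `|(A * Cs - a 0%N) / delta|.
have hk : (A * Cs - a 0%N) / delta < k%:R.
  exact: le_lt_trans (ler_norm _) (archi_boundP (normr_ge0 _)).
have [T hT] := grow k.
have [t [Tt ht]] := bad T.
have : a T <= a t by rewrite -(subnK Tt); exact: monok.
have := abound t ht.
move: hk; rewrite ltr_pdivrMr // ltrBlDl => hk.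
move=> h1 h2.
have := lt_le_trans hk (le_trans hT (le_trans h2 h1)).
by rewrite ltxx.
Qed.
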